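(* Let $\Lambda$ be an integral lattice of signature $(2,b)$ with $b\ge3$ and $\tilde{\mathrm{O}}^+(\Lambda)$ the kernel of $\mathrm{O}^+(\Lambda)\to\mathrm{O}(\Lambda^\vee/\Lambda)$. Then for every $k$, $M_k(\tilde{\mathrm{O}}^+(\Lambda),\det)^{(1)}=M_k(\tilde{\mathrm{O}}^+(\Lambda),\det)$, i.e. every modular form of weight $k$ and character $\det$ for $\tilde{\mathrm{O}}^+(\Lambda)$ vanishes along every irreducible component of the $(-2)$-Heegner divisor.
   Context: $\mathcal{D}$ is one of the two connected components of $\{[\omega]\in\mathbb{P}(\Lambda\otimes\mathbb{C}):(\omega,\omega)=0,(\omega,\bar\omega)>0\}$ and $\mathrm{O}^+(\Lambda)$ the subgroup of $\mathrm{O}(\Lambda)$ preserving $\mathcal{D}$. $\lambda=\mathcal{O}(-1)|_{\mathcal{D}}$. $M_k(\Gamma,\chi)$ is the space of $\Gamma$-invariant holomorphic sections of $\lambda^{\otimes k}\otimes\chi$ on $\mathcal{D}$. The $(-2)$-Heegner divisor is $\mathcal{H}=\bigcup_{\delta\in\Lambda,(\delta,\delta)=-2}\delta^\perp\cap\mathcal{D}$, and $M_k(\Gamma,\chi)^{(m)}$ is the subspace of forms vanishing to order $\ge m$ along every irreducible component of $\mathcal{H}$. *)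

(* Defs.v *)
From HB Require Import structures.
From mathcomp Require Import all_boot all_order all_algebra.
From mathcomp Require Import reals complex.
Set Implicit Arguments.
Unset Strict Implicit.
Unset Printing Implicit Defensive.
Import Order.TTheory GRing.Theory Num.Theory.
Local Open Scope ring_scope.

(* Lattice Lambda = Z^n with (integral) Gram matrix G : 'M[int]_n. *)

Definition intmx (F : nzRingType) (n m : nat) (A : 'M[int]_(n, m)) : 'M[F]_(n, m) :=
  map_mx (fun z : int => z%:~R) A.

Definition has_signature (R : realType) (p q : nat) (G : 'M[int]_(p + q)) : Prop :=
  exists P : 'M[R]_(p + q), P \in unitmx /\
    P^T *m intmx R G *m P = diag_mx (\row_(i < p + q) (if (i < p)%N then 1 else -1)).

Arguments has_signature R p q G : clear implicits.

Definition bilC (R : realType) (n : nat) (G : 'M[int]_n) (w v : 'cV[R[i]]_n) : R[i] :=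
  (w^T *m intmx R[i] G *m v) 0 0.

Definition conjv (R : realType) (n : nat) (w : 'cV[R[i]]_n) : 'cV[R[i]]_n :=
  map_mx (fun z : R[i] => z^*) w.

(* affine cone over {[w] : (w,w)=0, (w,wbar)>0} *)
Definition Omega (R : realType) (n : nat) (G : 'M[int]_n) (w : 'cV[R[i]]_n) : Prop :=
  w != 0 /\ bilC G w w = 0 /\ 0 < bilC G w (conjv w).

Definition openC (R : realType) (n : nat) (U : 'cV[R[i]]_n -> Prop) : Prop :=
  forall z, U z -> exists e : R[i], 0 < e /\
    forall w : 'cV[R[i]]_n, (forall j, `|w j 0 - z j 0| < e) -> U w.

Definition connectedC (R : realType) (n : nat) (S : 'cV[R[i]]_n -> Prop) : Prop :=
  forall A B : 'cV[R[i]]_n -> Prop, openC A -> openC B ->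
    (forall z, S z -> A z \/ B z) ->
    (forall z, S z -> A z -> B z -> False) ->
    (forall z, S z -> A z) \/ (forall z, S z -> B z).

Definition conn_component (R : realType) (n : nat) (X D : 'cV[R[i]]_n -> Prop) : Prop :=
  [/\ forall z, D z -> X z, exists z, D z, connectedC D &
      forall S, (forall z, S z -> X z) -> connectedC S -> (exists z, S z /\ D z) ->
        forall z, S z -> D z].

(* holomorphic on an open set U of C^n: continuous and holomorphic in each
   variable separately (equivalent to joint holomorphy by Osgood's lemma) *)
Definition holomorphic_on (R : realType) (n : nat) (U : 'cV[R[i]]_n -> Prop)
    (H : 'cV[R[i]]_n -> R[i]) : Prop :=
  (forall z, U z -> forall eps : R[i], 0 < eps -> exists del : R[i], 0 < del /\
     forall w, U w -> (forall j, `|w j 0 - z j 0| < del) -> `|H w - H z| < eps) /\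
  (forall z, U z -> forall j : 'I_n, exists l : R[i],
     forall eps : R[i], 0 < eps -> exists del : R[i], 0 < del /\
       forall h : R[i], 0 < `|h| < del ->
         `|(H (z + h *: delta_mx j 0) - H z) / h - l| < eps).

Definition holomorphic_on_sub (R : realType) (n : nat) (D : 'cV[R[i]]_n -> Prop)
    (F : 'cV[R[i]]_n -> R[i]) : Prop :=
  forall z, D z -> exists (U : 'cV[R[i]]_n -> Prop) (H : 'cV[R[i]]_n -> R[i]),
    [/\ openC U, U z, holomorphic_on U H & forall w, U w -> D w -> F w = H w].

Definition orthO (n : nat) (G g : 'M[int]_n) : Prop :=
  g \in unitmx /\ g^T *m G *m g = G.

(* g acts trivially on Lambda^vee / Lambda, Lambda^vee = {v in Q^n | G v in Z^n} *)
Definition acts_trivially_on_discr (n : nat) (G g : 'M[int]_n) : Prop :=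
  forall v : 'cV[rat]_n, (forall i, (intmx rat G *m v) i 0 \is a Num.int) ->
    forall i, (intmx rat g *m v - v) i 0 \is a Num.int.

Definition Oplus (R : realType) (n : nat) (G : 'M[int]_n) (D : 'cV[R[i]]_n -> Prop)
    (g : 'M[int]_n) : Prop :=
  orthO G g /\ forall w, D w <-> D (intmx R[i] g *m w).

Definition Otilde_plus (R : realType) (n : nat) (G : 'M[int]_n) (D : 'cV[R[i]]_n -> Prop)
    (g : 'M[int]_n) : Prop :=
  Oplus G D g /\ acts_trivially_on_discr G g.

Definition detchar (R : realType) (n : nat) (g : 'M[int]_n) : R[i] := (\det g)%:~R.

(* M_k(Gamma, chi): holomorphic functions on the cone D^bullet, homogeneous of
   degree -k (= holomorphic sections of lambda^k) with F(g w) = chi(g) F(w). *)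
Definition modular_form (R : realType) (n : nat) (D : 'cV[R[i]]_n -> Prop)
    (Gamma : 'M[int]_n -> Prop) (chi : 'M[int]_n -> R[i]) (k : int)
    (F : 'cV[R[i]]_n -> R[i]) : Prop :=
  [/\ holomorphic_on_sub D F,
      forall (t : R[i]) w, t != 0 -> D w -> F (t *: w) = t ^ (- k) * F w &
      forall g w, Gamma g -> D w -> F (intmx R[i] g *m w) = chi g * F w].

Definition vanishes_on_Heegner (R : realType) (n : nat) (G : 'M[int]_n)
    (D : 'cV[R[i]]_n -> Prop) (F : 'cV[R[i]]_n -> R[i]) : Prop :=
  forall delta : 'cV[int]_n, (delta^T *m G *m delta) 0 0 = - 2 ->
    forall w, D w -> bilC G (intmx R[i] delta) w = 0 -> F w = 0.

Definition modular_form1 (R : realType) (n : nat) (G : 'M[int]_n) (D : 'cV[R[i]]_n -> Prop)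
    (Gamma : 'M[int]_n -> Prop) (chi : 'M[int]_n -> R[i]) (k : int)
    (F : 'cV[R[i]]_n -> R[i]) : Prop :=
  modular_form D Gamma chi k F /\ vanishes_on_Heegner G D F.

(* Main.v *)
Require Import Defs.
From mathcomp Require Import all_boot all_order all_algebra.
From mathcomp Require Import reals complex.
Import GRing.Theory Num.Theory.
Local Open Scope ring_scope.
Import Order.TTheory.

Lemma det_rank1 (n : nat) (u : 'cV[int]_n) (v : 'rV[int]_n) :
  \det (1%:M + u *m v) = 1 + (v *m u) 0 0.
Proof.
pose L : 'M[int]_(1 + n) := block_mx 1%:M v 0 1%:M.
pose M : 'M[int]_(1 + n) := block_mx 1%:M 0 u (1%:M + u *m v).
pose L' : 'M[int]_(1 + n) := block_mx 1%:M (- v) 0 1%:M.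
have E : L *m M *m L' = block_mx (1%:M + v *m u) 0 u 1%:M.
  rewrite /L /M /L' !mulmx_block !mul1mx !mulmx1 !mul0mx !mulmx0 !addr0 !add0r.
  have -> : (1%:M + v *m u) *m - v + v *m (1%:M + u *m v) = 0.
    by rewrite mulmxN mulmxDl mul1mx mulmxDr mulmx1 mulmxA addNr.
  by rewrite mulmxN addrCA addNr addr0.
have := congr1 determinant E.
rewrite !det_mulmx /L /M /L' !det_ublock !det_lblock !det1 !mul1r !mulr1.
move=> ->; by rewrite det_mx11 !mxE.
Qed.

Section Refl.
Variables (n : nat) (G : 'M[int]_n) (d : 'cV[int]_n).
Hypothesis GT : G^T = G.
Hypothesis hd : (d^T *m G *m d) 0 0 = - 2.
Definition refl := 1%:M + d *m (d^T *m G).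

Lemma dGd : d^T *m G *m d = (- 2)%:M.
Proof. by rewrite [LHS]mx11_scalar hd. Qed.

Lemma refl_invol : refl *m refl = 1%:M.
Proof.
rewrite /refl mulmxDl mul1mx mulmxDr mulmx1.
have -> : d *m (d^T *m G) *m (d *m (d^T *m G)) = (-2) *: (d *m (d^T *m G)).
  rewrite -mulmxA (mulmxA (d^T *m G) d) dGd.
  by rewrite mul_scalar_mx -scalemxAr.
rewrite -[X in _ + (X + _) = _]scale1r -scalerDl.
by rewrite (_ : 1 + (-2) = -1 :> int) // scaleN1r addrK.
Qed.

Lemma refl_orth : refl^T *m G *m refl = G.
Proof.
have E : refl^T *m G = G *m refl.
  rewrite /refl linearD /= trmx1 trmx_mul trmx_mul GT mulmxDl mul1mx mulmxDr mulmx1.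
  by rewrite !mulmxA trmxK.
by rewrite E -mulmxA refl_invol mulmx1.
Qed.

Lemma refl_det : \det refl = -1.
Proof.
rewrite /refl det_rank1 hd.
by [].
Qed.

Lemma refl_disc : acts_trivially_on_discr G refl.
Proof.
move=> v hv i.
rewrite /refl /intmx map_mxD map_mx1 mulmxDl mul1mx addrAC subrr add0r !map_mxM.
rewrite -!mulmxA mxE rpred_sum // => j _.
apply: rpredM; first by rewrite mxE intr_int.
rewrite mxE; apply: rpred_sum => l _.
by apply: rpredM; [rewrite !mxE intr_int | exact: hv].
Qed.
End Refl.

Section An.
Variables (R : realType) (n : nat).
Local Notation C := (R[i]).

Lemma open_pre (M : 'M[C]_n) (A : 'cV[C]_n -> Prop) :
  openC A -> openC (fun z => A (M *m z)).
Proof.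
move=> oA z Az; have [e [e0 He]] := oA _ Az.
pose S : C := \sum_j \sum_k `|M j k|.
have S0 : 0 <= S by apply: sumr_ge0 => j _; apply: sumr_ge0 => k _.
have K0 : 0 < 1 + S by rewrite addrC; apply: ltr_wpDl.
exists (e / (1 + S)); split; first by rewrite divr_gt0.
move=> w Hw; apply: He => j.
have -> : (M *m w) j 0 - (M *m z) j 0 = (M *m (w - z)) j 0 by rewrite mulmxBr !mxE.
rewrite mxE.
apply: (le_lt_trans (ler_norm_sum _ _ _)).
apply: (@le_lt_trans _ _ ((\sum_k `|M j k|) * (e / (1 + S)))).
  rewrite mulr_suml; apply: ler_sum => k _.
  rewrite normrM; apply: ler_wpM2l => //.
  by rewrite !mxE; apply: ltW; apply: Hw.
have Sj : \sum_k `|M j k| <= S.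
  rewrite /S [X in _ <= X](bigD1 j) //= lerDl; apply: sumr_ge0 => l _; apply: sumr_ge0 => k _; apply: normr_ge0.
apply: (@le_lt_trans _ _ (S * (e / (1 + S)))).
  by apply: ler_wpM2r => //; apply: ltW; rewrite divr_gt0.
rewrite -[X in _ < X](divfK (lt0r_neq0 K0)) mulrC ltr_pM2l ?divr_gt0 //.
by rewrite ltrDr ltr01.
Qed.
End An.

Lemma conn_inv (R : realType) (n : nat) (X D : 'cV[R[i]]_n -> Prop)
  (f : 'cV[R[i]]_n -> 'cV[R[i]]_n) :
  conn_component X D -> (forall z, X z -> X (f z)) -> (forall z, f (f z) = z) ->
  (forall A, openC A -> openC (fun z => A (f z))) ->
  (exists z, D z /\ D (f z)) -> forall w, D w <-> D (f w).
Proof.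
move=> [DX _ cD maxD] Xf ff fo [z0 [Dz0 Dfz0]].
have key : forall w, D (f w) -> D w.
  apply: (maxD (fun z => D (f z))).
  - by move=> z /DX /Xf; rewrite ff.
  - move=> A B oA oB cov dis.
    have c1 : forall z, D z -> A (f z) \/ B (f z).
      by move=> z Dz; apply: cov; rewrite ff.
    have c2 : forall z, D z -> A (f z) -> B (f z) -> False.
      by move=> z Dz; apply: dis; rewrite ff.
    have [H|H] := cD (fun z => A (f z)) (fun z => B (f z)) (fo _ oA) (fo _ oB) c1 c2.
    + by left => z Dfz; rewrite -[z]ff; apply: H.
    + by right => z Dfz; rewrite -[z]ff; apply: H.
  - by exists z0.
move=> w; split => [Dw|]; last exact: key.
by apply: key; rewrite ff.
Qed.

Section Om.
Variables (R : realType) (n : nat) (G M : 'M[int]_n).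
Hypothesis MM : M *m M = 1%:M.
Hypothesis MGM : M^T *m G *m M = G.

Lemma intmxM (m p q : nat) (A : 'M[int]_(m, p)) (B : 'M[int]_(p, q)) :
  intmx R[i] (A *m B) = intmx R[i] A *m intmx R[i] B.
Proof. by rewrite /intmx map_mxM. Qed.

Lemma conj_intmx (m p : nat) (A : 'M[int]_(m, p)) :
  map_mx (fun z : R[i] => z^*) (intmx R[i] A) = intmx R[i] A.
Proof. by apply/matrixP => i j; rewrite !mxE rmorph_int. Qed.

Lemma Omega_pres z : Omega G z -> Omega G (intmx R[i] M *m z).
Proof.
have MM' : intmx R[i] M *m intmx R[i] M = 1%:M by rewrite -intmxM MM /intmx map_mx1.
have MGM' : (intmx R[i] M)^T *m intmx R[i] G *m intmx R[i] M = intmx R[i] G.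
  by rewrite /intmx map_trmx -!map_mxM MGM.
have bil : forall x y, bilC G (intmx R[i] M *m x) (intmx R[i] M *m y) = bilC G x y.
  move=> x y; rewrite /bilC trmx_mul !mulmxA -(mulmxA x^T) -(mulmxA x^T).
  by congr ((_ *m _ *m _) 0 0); exact: MGM'.
have cj : conjv (intmx R[i] M *m z) = intmx R[i] M *m conjv z.
  by rewrite /conjv map_mxM conj_intmx.
move=> [z0 [zz zc]]; split; [|split].
- apply: contraNneq z0 => H.
  by rewrite -[z]mul1mx -MM' -mulmxA H mulmx0.
- by rewrite bil.
- by rewrite cj bil.
Qed.
End Om.

Theorem corollary3p3 (R : realType) (b : nat) (G : 'M[int]_(2 + b)) :
  (3 <= b)%N -> G^T = G -> has_signature R 2 b G ->
  forall D : 'cV[R[i]]_(2 + b) -> Prop, conn_component (Omega G) D ->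
  forall (k : int) (F : 'cV[R[i]]_(2 + b) -> R[i]),
    modular_form1 G D (Otilde_plus G D) (@detchar R _) k F <->
    modular_form D (Otilde_plus G D) (@detchar R _) k F.
Proof.
move=> _ GT _ D cD k F; split; first by case.
move=> mf; split => //.
case: mf => _ _ Finv.
move=> d hd w Dw dw.
set s := @refl _ G d.
have sw : intmx R[i] s *m w = w.
  rewrite /s /refl /intmx map_mxD map_mx1 mulmxDl mul1mx !map_mxM -!mulmxA.
  have -> : (map_mx (fun z : int => z%:~R) d^T *m (map_mx (fun z : int => z%:~R) G *m w)) = 0.
    rewrite [LHS]mx11_scalar mulmxA -map_trmx.
    by move: dw; rewrite /bilC /intmx => ->; apply/matrixP => i j; rewrite !mxE mul0rn.
  by rewrite mulmx0 addr0.
have ss := @refl_invol _ G d hd.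
have sorth := @refl_orth _ G d GT hd.
have sG : Otilde_plus G D s.
  split; last exact: refl_disc.
  split; first by split => //; case: (mulmx1_unit ss).
  apply: (@conn_inv R _ (Omega G) D) => //.
  - by move=> z; apply: Omega_pres.
  - by move=> z; rewrite mulmxA -intmxM ss /intmx map_mx1 mul1mx.
  - by move=> A; apply: open_pre.
  - by exists w; rewrite sw.
have := Finv s w sG Dw.
rewrite sw /detchar (@refl_det _ G d hd) => /eqP.
by rewrite mulN1r eq_sym eqNr => /eqP.
Qed.
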